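(* Let $k=\mathbb R$. For any $1$-cocycle $(b,a)_c:G_{\mathbb R}\to\pi/[\pi]^2_3$, either $\delta_3^{\operatorname{mod}2}((b,a)_c)=0$ or $\delta_3^{\operatorname{mod}2}((b,a)_{c+\{-1\}})=0$.
   Context: $\pi=\pi_1^{et}(\mathbb P^1_{\mathbb C}-\{0,1,\infty\},\overrightarrow{01})\cong\langle x,y\rangle^\wedge$ (profinite free group; $x$ loop around $0$, $y$ loop around $1$) with $G_{\mathbb R}$-action $\sigma(x)=x^{\chi(\sigma)}$, $\sigma(y)=\mathfrak f(\sigma)^{-1}y^{\chi(\sigma)}\mathfrak f(\sigma)$, $\mathfrak f$ a cocycle valued in $[\pi]_2$. Lower exponent-$2$ central series: $[\pi]^2_1=\pi$, $[\pi]^2_{n+1}=\overline{[\pi,[\pi]^2_n]([\pi]^2_n)^2}$. $(\pi/[\pi]^2_3)^{ab}=\mathbb Z/4(1)x\oplus\mathbb Z/4(1)y$ and $\ker(\pi/[\pi]^2_3\to(\pi/[\pi]^2_3)^{ab})=\mathbb Z/2\,[x,y]$, so every cochain in $\pi/[\pi]^2_3$ has the form $(b,a)_c(g)=y^{a(g)}x^{b(g)}[x,y]^{c(g)}$ with $b,a$ valued in $\mathbb Z/4(1)$ and $c$ valued in $\mathbb Z/2$. $\delta_3^{\operatorname{mod}2}$ is the connecting map ${\rm H}^1(G,\pi/[\pi]^2_3)\to{\rm H}^2(G,K)$ of the central extension $1\to K\to\pi/([\pi]^2_4([\pi]^2_2)^2)\to\pi/[\pi]^2_3\to1$, $K\cong\mathbb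 Z/2[[x,y],x]\oplus\mathbb Z/2[[x,y],y]$ with trivial action (equivalently, the mod-$2$ reduction of the obstruction $\delta_3$ for $1\to[\pi]_3/[\pi]_4\to\pi/[\pi]_4\to\pi/[\pi]_3\to1$). $\{-1\}:G_{\mathbb R}\to\mathbb Z/2$ is the Kummer cocycle of $-1$, i.e. the nontrivial character of $G_{\mathbb R}$. *)

(* Defs.v *)
From mathcomp Require Import all_boot all_order all_algebra.
Set Implicit Arguments.
Unset Strict Implicit.
Unset Printing Implicit Defensive.
Import GRing.Theory.
Local Open Scope ring_scope.

(* The absolute Galois group G_R = Gal(C/R) = {1, complex conjugation}. *)
(* false = identity, true = complex conjugation.                        *)
Definition GR := bool.
Definition gmul (g h : GR) : GR := xorb g h.

(* Kummer cocycle {-1} : G_R -> Z/2 (the nontrivial character). *)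
Definition kummer_m1 (g : GR) : 'Z_2 := if g then 1 else 0.

(* The finite 2-group  Q := pi / ([pi]^2_4 ([pi]^2_2)^2)   (order 128).
   An element (a, b, e, p, q) stands for the normal form
        y^a x^b [x,y]^e [[x,y],x]^p [[x,y],y]^q,
   a, b in Z/4, e, p, q in Z/2; K = <[[x,y],x], [[x,y],y]> = (p, q)-part. *)
Definition Q := ('Z_4 * 'Z_4 * 'Z_2 * 'Z_2 * 'Z_2)%type.
Definition qa (g : Q) : 'Z_4 := g.1.1.1.1.
Definition qb (g : Q) : 'Z_4 := g.1.1.1.2.
Definition qc (g : Q) : 'Z_2 := g.1.1.2.
Definition qu (g : Q) : 'Z_2 := g.1.2.
Definition qv (g : Q) : 'Z_2 := g.2.

Definition m2 (n : nat) : 'Z_2 := inZp n.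

Definition qmul (g h : Q) : Q :=
  (qa g + qa h, qb g + qb h,
   qc g + qc h + m2 (qa h * qb g)%N,
   qu g + qu h + m2 (qa h * 'C(qb g, 2))%N
               + m2 ((qc g + qa h * qb g) * qb h)%N,
   qv g + qv h + m2 (qc g * qa h)%N + m2 (qb g * 'C(qa h, 2))%N).

Definition qone : Q := (0, 0, 0, 0, 0).
Definition qinv (g : Q) : Q :=
  let A : 'Z_4 := - qa g in let B : 'Z_4 := - qb g in
  (A, B, qc g + m2 (A * B)%N,
   qu g + m2 (A * 'C(B, 2))%N + m2 (qc g * B)%N,
   qv g + m2 (B * 'C(A, 2))%N + m2 (qc g * A)%N).

Lemma qinvK (g : Q) : qmul g (qinv g) = qone /\ qmul (qinv g) g = qone.
Proof.
case: g => [[[[[[|[|[|[|a]]]] Ha] [[|[|[|[|b]]]] Hb]] [[|[|e]] He]]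
            [[|[|p]] Hp]] [[|[|q]] Hq]] //;
by split; apply/eqP; rewrite /qmul /qinv /qone /=; vm_compute.
Qed.
Definition qpow (g : Q) (n : nat) : Q := iter n (qmul g) qone.
Definition qcomm (g h : Q) : Q := qmul (qmul (qinv g) (qinv h)) (qmul g h).

Definition qx : Q := (0, 1, 0, 0, 0).
Definition qy : Q := (1, 0, 0, 0, 0).

(* The image of [pi]_2 (closed commutator subgroup) in Q = [Q,Q]:
   the elements with trivial x- and y-exponent. *)
Definition in_comm (g : Q) : Prop := qa g = 0 /\ qb g = 0.

(* The G_R-action on Q attached to f : G_R -> Q (image of the cocycle
   f valued in [pi]_2):  g(x) = x^chi(g),  g(y) = f(g)^-1 y^chi(g) f(g),
   chi(conj) = -1, extended to the normal form as a homomorphism. *)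
Definition gx (g : GR) : Q := if g then qinv qx else qx.
Definition gy (f : GR -> Q) (g : GR) : Q :=
  qmul (qmul (qinv (f g)) (if g then qinv qy else qy)) (f g).
Definition act (f : GR -> Q) (g : GR) (t : Q) : Q :=
  let X := gx g in let Y := gy f g in
  let C := qcomm X Y in
  qmul (qmul (qmul (qmul (qpow Y (qa t)) (qpow X (qb t)))
                   (qpow C (qc t)))
             (qpow (qcomm X C) (qu t)))
       (qpow (qcomm Y C) (qv t)).

Definition galois_cocycle (f : GR -> Q) : Prop :=
  (forall g, in_comm (f g)) /\
  (forall g h, f (gmul g h) = qmul (f g) (act f g (f h))).

(* P := pi / [pi]^2_3 = Q / K (order 32).  (a, b, e) stands for
   y^a x^b [x,y]^e.  Group law and action are induced from Q. *)
Definition P := ('Z_4 * 'Z_4 * 'Z_2)%type.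
Definition liftP (p : P) : Q := (p, 0, 0).
Definition projP (t : Q) : P := t.1.1.
Definition pmul (p p' : P) : P := projP (qmul (liftP p) (liftP p')).
Definition pact (f : GR -> Q) (g : GR) (p : P) : P := projP (act f g (liftP p)).

Definition cochain (b a : GR -> 'Z_4) (c : GR -> 'Z_2) : GR -> P :=
  fun g => (a g, b g, c g).

Definition is_cocycle1 (f : GR -> Q) (s : GR -> P) : Prop :=
  forall g h, s (gmul g h) = pmul (s g) (pact f g (s h)).

(* K = Z/2 [[x,y],x] + Z/2 [[x,y],y], trivial G_R-action. *)
Definition K := ('Z_2 * 'Z_2)%type.
Definition inK (k : K) : Q := (0, 0, 0, k.1, k.2).

(* delta_3^{mod 2}(s) = 0 in H^2(G_R, K): for the lift s~ = liftP o s,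
   the 2-cocycle z(g,h) (defined by s~(g) g(s~(h)) = s~(gh) z(g,h)) is a
   coboundary, i.e. z(g,h) = k(g) + k(h) - k(gh) for a 1-cochain k. *)
Definition delta3_mod2_vanishes (f : GR -> Q) (s : GR -> P) : Prop :=
  exists k : GR -> K, forall g h,
    qmul (liftP (s g)) (act f g (liftP (s h)))
    = qmul (liftP (s (gmul g h))) (inK (k g + k h - k (gmul g h))).

(* Main.v *)
Require Import Defs.
From mathcomp Require Import all_boot all_order all_algebra.
From Stdlib Require Import FunctionalExtensionality.
Local Open Scope ring_scope.

Definition z4s : seq 'Z_4 := [:: 0; 1; 2; 3].
Definition z2s : seq 'Z_2 := [:: 0; 1].
Lemma z4sP (x : 'Z_4) : x \in z4s.
Proof. by case: x => [[|[|[|[|n]]]] //= H]. Qed.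
Lemma z2sP (x : 'Z_2) : x \in z2s.
Proof. by case: x => [[|[|n]] //= H]. Qed.
Definition ks : seq K := [seq (u, v) | u <- z2s, v <- z2s].
Lemma ksP (k : K) : k \in ks.
Proof. case: k => u v; apply/allpairsP; exists (u, v); by rewrite /= z2sP z2sP. Qed.

Definition ff (f0 f1 : Q) (g : GR) : Q := if g then f1 else f0.
Definition sf (a0 a1 b0 b1 : 'Z_4) (c0 c1 : 'Z_2) (g : GR) : P :=
  if g then (a1, b1, c1) else (a0, b0, c0).
Definition gs : seq GR := [:: false; true].

Definition galb (f : GR -> Q) : bool :=
  all (fun g => all (fun h => f (gmul g h) == qmul (f g) (act f g (f h))) gs) gs.
Definition coc1b (f : GR -> Q) (s : GR -> P) : bool :=
  all (fun g => all (fun h => s (gmul g h) == pmul (s g) (pact f g (s h))) gs) gs.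
Definition delb (f : GR -> Q) (s : GR -> P) : bool :=
  has (fun k0 => has (fun k1 => let k := fun g : GR => if g then k1 else k0 in
   all (fun g => all (fun h => qmul (liftP (s g)) (act f g (liftP (s h)))
    == qmul (liftP (s (gmul g h))) (inK (k g + k h - k (gmul g h)))) gs) gs) ks) ks.

Definition c00 (f : GR -> Q) (s0 : P) : bool := s0 == pmul s0 (pact f false s0).
Definition sflip (s : GR -> P) : GR -> P :=
  fun g => let t := s g in (t.1.1, t.1.2, t.2 + kummer_m1 g).
Definition bigcheck : bool :=
  all (fun e0 => all (fun p0 => all (fun q0 => all (fun e1 => all (fun p1 => all (fun q1 =>
   let f := ff (0,0,e0,p0,q0) (0,0,e1,p1,q1) in
   if galb f then
   all (fun a0 => all (fun b0 => all (fun c0 => if c00 f (a0,b0,c0) then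
   all (fun a1 => all (fun b1 => all (fun c1 =>
     let s := sf a0 a1 b0 b1 c0 c1 in
     if coc1b f s then (if delb f s then true else delb f (sflip s)) else true)
   z2s) z4s) z4s else true) z2s) z4s) z4s else true) z2s) z2s) z2s) z2s) z2s) z2s.
Lemma bigcheckT : bigcheck.
Proof. vm_compute. reflexivity. Qed.

Lemma allE (T : eqType) (p : pred T) (s : seq T) x : x \in s -> all p s -> p x.
Proof. by move=> H /allP; apply. Qed.

Ltac step H := let K := fresh in move=> K; move: (@allE _ _ _ _ H K) => {K}; cbv beta zeta.

Lemma galbP f : galois_cocycle f -> galb f.
Proof. move=> [_ H]; apply/allP => g _; apply/allP => h _; apply/eqP; exact: H. Qed.
Lemma coc1bP f s : is_cocycle1 f s -> coc1b f s.
Proof. move=> H; apply/allP => g _; apply/allP => h _; apply/eqP; exact: H. Qed.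
Lemma c00P f s : is_cocycle1 f s -> c00 f (s false).
Proof. move=> H; apply/eqP; exact: (H false false). Qed.
Lemma gsP g : g \in gs. Proof. by case: g. Qed.
Lemma delbP f s : delb f s -> delta3_mod2_vanishes f s.
Proof.
move=> /hasP [k0 _ /hasP [k1 _ /allP H]].
exists (fun g => if g then k1 else k0) => g h; apply/eqP.
exact: (allP (H g (gsP g)) h (gsP h)).
Qed.

Lemma funeq (T : Type) (u v : GR -> T) : u false = v false -> u true = v true -> u = v.
Proof. move=> H0 H1; apply: functional_extensionality_dep; by case. Qed.

Lemma commE (t : Q) : in_comm t -> t = (0,0,qc t, qu t, qv t).
Proof. by case: t => [[[[x y] e] p] q]; rewrite /in_comm /qa /qb /= => -[-> ->]. Qed.

Theorem proposition12p8 (f : GR -> Q) (b a : GR -> 'Z_4) (c : GR -> 'Z_2) :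
  galois_cocycle f ->
  is_cocycle1 f (cochain b a c) ->
  delta3_mod2_vanishes f (cochain b a c) \/
  delta3_mod2_vanishes f (cochain b a (fun g => c g + kummer_m1 g)).
Proof.
move=> Hg Hs.
have Ef : f = ff (0,0,qc (f false), qu (f false), qv (f false))
                 (0,0,qc (f true), qu (f true), qv (f true)).
  by apply: funeq; rewrite /ff -commE //; case: Hg.
have Es : cochain b a c = sf (a false) (a true) (b false) (b true) (c false) (c true).
  by apply: funeq.
have Es' : cochain b a (fun g => c g + kummer_m1 g) =
   sflip (sf (a false) (a true) (b false) (b true) (c false) (c true)).
  by apply: funeq.
have G := galbP _ Hg. have C := coc1bP _ _ Hs. have C0 := c00P _ _ Hs.
rewrite Es' Es; rewrite Es in C C0; rewrite Ef in G C C0 *.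
move: bigcheckT; rewrite /bigcheck.
step (z2sP (qc (f false))). step (z2sP (qu (f false))). step (z2sP (qv (f false))).
step (z2sP (qc (f true))). step (z2sP (qu (f true))). step (z2sP (qv (f true))).
rewrite G.
step (z4sP (a false)). step (z4sP (b false)). step (z2sP (c false)).
rewrite C0.
step (z4sP (a true)). step (z4sP (b true)). step (z2sP (c true)).
rewrite C.
case: ifP => [D _|_ D]; [left|right]; exact: delbP _ _ D.
Qed.
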